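(* Let $\mu>0$, $u_a\in\mathbb{R}$, $\alpha_->0$, $\alpha_+>0$, $u_->u_+$, $\sigma_0\in(u_+,u_-)$, $\omega_0\ge0$. Set $\alpha_l\equiv\alpha_-$, $\alpha_r\equiv\alpha_+$, $u_l(t)=u_a+(u_--u_a)e^{-\mu t}$, $u_r(t)=u_a+(u_+-u_a)e^{-\mu t}$. Then the initial value problem $$\frac{d\omega}{dt}=(\alpha_r-\alpha_l)\sigma-(\alpha_ru_r-\alpha_lu_l),\quad \frac{d(\omega\sigma)}{dt}=(\alpha_ru_r-\alpha_lu_l)\sigma-(\alpha_ru_r^2-\alpha_lu_l^2)+\mu(u_a-\sigma)\omega,$$ $$\omega(0)=\omega_0,\qquad \sigma(0)\omega(0)=\sigma_0\omega_0,$$ has a solution $(\omega,\sigma)\in\mathcal{C}^1([0,\infty))^2$ satisfying Lax's entropy condition $u_r(t)<\sigma(t)<u_l(t)$ for all $t\ge0$. *)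

(* Defs.v *)
From Stdlib Require Import Reals.
Open Scope R_scope.

(* f has derivative f' at every point of [0, +oo), where the derivative is
   taken within [0, +oo) (so at t = 0 it is the right derivative). *)
Definition has_deriv_nonneg (f f' : R -> R) : Prop :=
  forall t, 0 <= t ->
    limit1_in (fun h => (f (t + h) - f t) / h)
              (fun h => h <> 0 /\ 0 <= t + h) (f' t) 0.

Definition continuous_nonneg (g : R -> R) : Prop :=
  forall t, 0 <= t -> limit1_in g (fun s => 0 <= s) (g t) t.

Definition C1_nonneg_with (f f' : R -> R) : Prop :=
  has_deriv_nonneg f f' /\ continuous_nonneg f'.

(* Main.v *)
Require Import Defs.
From Stdlib Require Import Reals Lra.
From Coquelicot Require Import Coquelicot.
Open Scope R_scope.

Lemma deriv_bridge (f f' : R -> R) :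
  (forall t, 0 <= t -> is_derive f t (f' t)) -> has_deriv_nonneg f f'.
Proof.
  intros H t Ht eps Heps.
  destruct (proj1 (is_derive_Reals _ _ _) (H t Ht) eps Heps) as [del Hd].
  exists del; split; [apply cond_pos|].
  intros h [[Hh0 _] Hdist]. simpl in *. unfold R_dist in *.
  rewrite Rminus_0_r in Hdist. apply Hd; auto.
Qed.

Lemma cont_bridge (g : R -> R) :
  (forall t, 0 <= t -> continuity_pt g t) -> continuous_nonneg g.
Proof.
  intros H t Ht eps Heps.
  destruct (H t Ht eps Heps) as [alp [Halp Hd]].
  exists alp; split; auto.
  intros s [Hs Hdist]. simpl in *.
  destruct (Req_dec t s) as [<-|Hne].
  - unfold R_dist. rewrite Rminus_diag, Rabs_R0. auto.
  - apply Hd. split; auto. split; auto. exact I.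
Qed.

Lemma der_cont f t l : is_derive f t l -> continuity_pt f t.
Proof.
  intros H. apply derivable_continuous_pt. exists l.
  apply is_derive_Reals; exact H.
Qed.

Lemma cont_plus f g t : continuity_pt f t -> continuity_pt g t -> continuity_pt (fun s => f s + g s) t.
Proof. intros; exact (continuity_pt_plus f g t H H0). Qed.
Lemma cont_minus f g t : continuity_pt f t -> continuity_pt g t -> continuity_pt (fun s => f s - g s) t.
Proof. intros; exact (continuity_pt_minus f g t H H0). Qed.
Lemma cont_mult f g t : continuity_pt f t -> continuity_pt g t -> continuity_pt (fun s => f s * g s) t.
Proof. intros; exact (continuity_pt_mult f g t H H0). Qed.
Lemma cont_div f g t : continuity_pt f t -> continuity_pt g t -> g t <> 0 -> continuity_pt (fun s => f s / g s) t.
Proof. intros; exact (continuity_pt_div f g t H H0 H1). Qed.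
Lemma cont_const c t : continuity_pt (fun _ => c) t.
Proof. apply continuity_pt_const. intros ? ?; reflexivity. Qed.
Lemma cont_pow2 f t : continuity_pt f t -> continuity_pt (fun s => (f s)^2) t.
Proof. intros H. simpl. apply cont_mult; auto. apply cont_mult; auto. apply cont_const. Qed.

Lemma der_mult f g t df dg : is_derive f t df -> is_derive g t dg ->
  is_derive (fun s => f s * g s) t (df * g t + f t * dg).
Proof. intros H1 H2. apply (is_derive_mult f g t df dg H1 H2). intros; apply Rmult_comm. Qed.

Definition ee mu t := exp (- mu * t).
Lemma ee_der mu t : is_derive (ee mu) t (- mu * ee mu t).
Proof. unfold ee. auto_derive; auto. ring. Qed.


Definition xx mu t := 1 - ee mu t.
Definition bb mu o B d t := mu*o + B*d*xx mu t.
Definition NN mu o c B d t := 2*mu*o*c*xx mu t + B*d^2*(xx mu t)^2.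
Definition WW mu o c B d t := mu*o*c + B*d^2*xx mu t.
Definition DD A B mu o c d t := (bb mu o B d t)^2 + (A-B)*NN mu o c B d t.
Definition UU A B mu o c d t := sqrt (DD A B mu o c d t).
Definition YY A B mu o c d t := NN mu o c B d t / (bb mu o B d t + UU A B mu o c d t).
Definition ZZ A B mu o c d t := (WW mu o c B d t - B*d*YY A B mu o c d t) / UU A B mu o c d t.

Section S.
Context (A B mu o c d : R).
Hypotheses (HA : 0 < A) (HB : 0 < B) (Hmu : 0 < mu) (Ho : 0 < o) (Hc : 0 < c) (Hcd : c < d).

Lemma ee_pos t : 0 < ee mu t.
Proof. unfold ee; apply exp_pos. Qed.
Lemma ee_le1 t : 0 <= t -> ee mu t <= 1.
Proof. intros Ht. unfold ee. rewrite <- exp_0. destruct (Req_dec t 0) as [->|Hn].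
  replace (-mu*0) with 0 by ring; lra. left; apply exp_increasing. nra. Qed.
Lemma xx_ge0 t : 0 <= t -> 0 <= xx mu t.
Proof. intros Ht; unfold xx; generalize (ee_le1 t Ht); lra. Qed.

Lemma DD_ge t : 0 <= t -> (mu*o)^2 <= DD A B mu o c d t.
Proof.
  intros Ht. generalize (xx_ge0 t Ht). intro Hx.
  unfold DD, bb, NN. set (x := xx mu t) in *.
  replace ((mu * o + B * d * x) ^ 2 + (A - B) * (2 * mu * o * c * x + B * d ^ 2 * x ^ 2))
    with ((mu*o)^2 + 2*mu*o*x*(A*c + B*(d-c)) + A*B*d^2*x^2) by ring.
  assert (0 <= 2*mu*o*x*(A*c + B*(d-c))).
  { assert (0 <= mu*o) by nra. assert (0 <= mu*o*x) by (apply Rmult_le_pos; lra).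
    assert (0 <= A*c) by nra. assert (0 <= B*(d-c)) by nra. nra. }
  assert (0 <= A*B*d^2*x^2). { apply Rmult_le_pos; [|nra]. apply Rmult_le_pos; nra. }
  lra.
Qed.

Lemma DD_pos t : 0 <= t -> 0 < DD A B mu o c d t.
Proof. intros Ht; generalize (DD_ge t Ht). assert (0 < mu*o) by nra. nra. Qed.
Lemma UU_ge t : 0 <= t -> mu*o <= UU A B mu o c d t.
Proof. intros Ht. unfold UU. rewrite <- (sqrt_pow2 (mu*o)) by nra.
  apply sqrt_le_1_alt. generalize (DD_ge t Ht). lra. Qed.
Lemma UU_pos t : 0 <= t -> 0 < UU A B mu o c d t.
Proof. intros Ht; generalize (UU_ge t Ht). assert (0 < mu*o) by nra. lra. Qed.
Lemma UU_sq t : 0 <= t -> UU A B mu o c d t * UU A B mu o c d t = DD A B mu o c d t.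
Proof. intros Ht. unfold UU. apply sqrt_sqrt. left; apply DD_pos; auto. Qed.
Lemma bb_pos t : 0 <= t -> 0 < bb mu o B d t.
Proof. intros Ht. generalize (xx_ge0 t Ht); intro. unfold bb.
  assert (0 <= B*d*xx mu t) by (apply Rmult_le_pos; nra). nra. Qed.

Lemma key t : 0 <= t -> UU A B mu o c d t = bb mu o B d t + (A-B)*YY A B mu o c d t.
Proof.
  intros Ht. generalize (UU_sq t Ht) (UU_pos t Ht) (bb_pos t Ht). unfold YY, DD.
  set (U := UU A B mu o c d t). set (b := bb mu o B d t). set (N := NN mu o c B d t).
  intros HU HUp Hb.
  apply Rmult_eq_reg_r with (b + U); [|lra].
  field_simplify; [|lra]. rewrite <- (Rmult_1_r (U*U)) in HU. nra.
Qed.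

Lemma der_eq (f : R -> R) (t l l' : R) : is_derive f t l -> l = l' -> is_derive f t l'.
Proof. intros H ->; exact H. Qed.

Lemma bb_der t : is_derive (bb mu o B d) t (B*d*(mu*ee mu t)).
Proof. unfold bb, xx, ee. auto_derive; auto. ring. Qed.
Lemma NN_der t : is_derive (NN mu o c B d) t (2*WW mu o c B d t*(mu*ee mu t)).
Proof. unfold NN, WW, xx, ee. auto_derive; auto. ring. Qed.
Lemma WW_der t : is_derive (WW mu o c B d) t (B*d^2*(mu*ee mu t)).
Proof. unfold WW, xx, ee. auto_derive; auto. ring. Qed.
Lemma DD_der t : is_derive (DD A B mu o c d) t
  (2*bb mu o B d t*(B*d*(mu*ee mu t)) + (A-B)*(2*WW mu o c B d t*(mu*ee mu t))).
Proof. unfold DD, bb, NN, WW, xx, ee. auto_derive; auto. ring. Qed.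

Lemma UU_der t : 0 <= t -> is_derive (UU A B mu o c d) t
  (mu*ee mu t*((A-B)*ZZ A B mu o c d t + B*d)).
Proof.
  intros Ht. unfold UU at 1. eapply der_eq.
  apply is_derive_sqrt. apply DD_der. apply DD_pos; auto.
  fold (UU A B mu o c d t). generalize (key t Ht) (UU_pos t Ht). unfold ZZ.
  set (U := UU A B mu o c d t). set (b := bb mu o B d t). set (Y := YY A B mu o c d t).
  set (W := WW mu o c B d t). set (E := ee mu t). clearbody U b Y W E.
  intros K HU. assert (b = U - (A-B)*Y) by lra. subst b. field. lra.
Qed.

Lemma YY_der t : 0 <= t -> is_derive (YY A B mu o c d) t (mu*ee mu t*ZZ A B mu o c d t).
Proof.
  intros Ht. unfold YY at 1. eapply der_eq.
  apply is_derive_div. apply NN_der.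
  apply (is_derive_plus (bb mu o B d) (UU A B mu o c d)). apply bb_der. apply UU_der; auto.
  generalize (UU_pos t Ht) (bb_pos t Ht); lra.
  generalize (key t Ht) (UU_pos t Ht) (bb_pos t Ht). unfold ZZ. 
  assert (HN : NN mu o c B d t = YY A B mu o c d t * (bb mu o B d t + UU A B mu o c d t)).
  { unfold YY. field. generalize (UU_pos t Ht) (bb_pos t Ht); lra. }
  rewrite HN. unfold plus; simpl.
  set (U := UU A B mu o c d t). set (b := bb mu o B d t). set (Y := YY A B mu o c d t).
  set (W := WW mu o c B d t). set (E := ee mu t). clearbody U b Y W E.
  intros K HU Hb. assert (b = U - (A-B)*Y) by lra. subst b. field. lra.
Qed.

Lemma ZZ_der t : 0 <= t -> is_derive (ZZ A B mu o c d) t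
   (mu*ee mu t*(B*(d-ZZ A B mu o c d t)^2 - A*(ZZ A B mu o c d t)^2)/UU A B mu o c d t).
Proof.
  intros Ht. unfold ZZ at 1. eapply der_eq.
  apply is_derive_div.
  apply (is_derive_minus (WW mu o c B d) (fun s => B*d*YY A B mu o c d s)). apply WW_der.
  apply is_derive_scal. apply YY_der; auto.
  apply UU_der; auto.
  generalize (UU_pos t Ht); lra.
  generalize (UU_pos t Ht).
  assert (HW : WW mu o c B d t = ZZ A B mu o c d t * UU A B mu o c d t + B*d*YY A B mu o c d t).
  { unfold ZZ. field. generalize (UU_pos t Ht); lra. }
  rewrite HW. unfold minus, plus, opp, scal; simpl. unfold mult; simpl.
  set (U := UU A B mu o c d t). set (Z := ZZ A B mu o c d t). set (Y := YY A B mu o c d t).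
  set (E := ee mu t). clearbody U Z Y E.
  intros HU. field. lra.
Qed.

Lemma YY_ge0 t : 0 <= t -> 0 <= YY A B mu o c d t.
Proof.
  intros Ht. unfold YY. generalize (UU_pos t Ht)
    (bb_pos t Ht) (xx_ge0 t Ht). unfold NN.
  set (x := xx mu t). intros. apply Rdiv_le_0_compat; [|lra].
  assert (0 <= mu*o*c) by (apply Rmult_le_pos; nra).
  assert (0 <= B*d^2) by nra. assert (0 <= 2*(mu*o*c)*x) by nra. nra.
Qed.

Lemma ZZ_bounds t : 0 <= t -> 0 < ZZ A B mu o c d t < d.
Proof.
  intros Ht.
  generalize (UU_pos t Ht)
    (UU_ge t Ht)
    (bb_pos t Ht) (xx_ge0 t Ht)
    (key t Ht) (YY_ge0 t Ht).
  unfold ZZ.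
  assert (HN : NN mu o c B d t = YY A B mu o c d t * (bb mu o B d t + UU A B mu o c d t)).
  { unfold YY. field. generalize (UU_pos t Ht)
      (bb_pos t Ht); lra. }
  revert HN. unfold NN, WW, bb.
  set (U := UU A B mu o c d t). set (Y := YY A B mu o c d t). set (x := xx mu t).
  clearbody U Y x. intros HN HU HUge Hb Hx K HY.
  split.
  - apply Rdiv_lt_0_compat; auto.
    assert (Hmo : 0 < mu*o) by nra.
    assert (HW: 0 < mu*o*c + B*d^2*x).
    { assert (0 <= B*d^2*x) by (apply Rmult_le_pos; nra). nra. }
    set (W := mu*o*c + B*d^2*x) in *.
    set (b := mu*o + B*d*x) in *.
    assert (Hbu : 0 < b + U) by lra.
    apply Rmult_lt_reg_r with (b+U); auto.
    replace ((W - B*d*Y)*(b+U)) with (W*(b+U) - B*d*(Y*(b+U))) by ring.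
    rewrite <- HN. unfold b, W.
    assert (H1 : B*d^2*x*U >= B*d^2*x*(mu*o)).
    { apply Rle_ge. apply Rmult_le_compat_l; [apply Rmult_le_pos; nra|lra]. }
    assert (H2 : B*d*x*(mu*o)*(d - c) >= 0).
    { apply Rle_ge. apply Rmult_le_pos; [|lra]. apply Rmult_le_pos; [|nra].
      apply Rmult_le_pos; nra. }
    assert (H3 : 0 < mu*o*(mu*o*c)) by (apply Rmult_lt_0_compat; nra).
    assert (H4 : 0 <= (mu*o*c)*U) by (apply Rmult_le_pos; nra).
    assert (Hd2 : 0 <= B*d^2) by (apply Rmult_le_pos; nra).
    assert (Hd2x : 0 <= B*d^2*x) by (apply Rmult_le_pos; nra).
    assert (Hdx : 0 <= B*d*x) by (apply Rmult_le_pos; [apply Rmult_le_pos|]; lra).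
    assert (H5 : 0 <= B*d^2*x*(B*d*x)) by (apply Rmult_le_pos; lra).
    assert (H6 : 0 <= (mu*o*c)*(B*d*x)) by (apply Rmult_le_pos; nra).
    nra.
  - apply Rmult_lt_reg_r with U; auto.
    unfold Rdiv. rewrite Rmult_assoc, Rinv_l by lra. rewrite Rmult_1_r.
    rewrite K.
    assert (0 <= A*d*Y) by (apply Rmult_le_pos; nra).
    assert (0 < mu*o*(d-c)) by (apply Rmult_lt_0_compat; nra).
    nra.
Qed.

Lemma init_vals : xx mu 0 = 0 /\ UU A B mu o c d 0 = mu*o /\ ZZ A B mu o c d 0 = c.
Proof.
  assert (Hx : xx mu 0 = 0). { unfold xx, ee. replace (-mu*0) with 0 by ring. rewrite exp_0; ring. }
  assert (HU : UU A B mu o c d 0 = mu*o).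
  { unfold UU, DD, bb, NN. rewrite Hx.
    replace ((mu * o + B * d * 0) ^ 2 + (A - B) * (2 * mu * o * c * 0 + B * d ^ 2 * 0 ^ 2))
      with ((mu*o)^2) by ring. apply sqrt_pow2. nra. }
  split; auto. split; auto.
  unfold ZZ, YY, WW, NN, bb. rewrite HU, Hx.
  assert (mu*o <> 0) by nra.
  replace (mu * o * c + B * d ^ 2 * 0 - B * d * ((2 * mu * o * c * 0 + B * d ^ 2 * 0 ^ 2) / (mu * o + B * d * 0 + mu * o)))
    with (mu*o*c) by (field; lra). field; lra.
Qed.
End S.


Lemma der_plus (f g : R -> R) t df dg : is_derive f t df -> is_derive g t dg ->
  is_derive (fun s => f s + g s) t (df + dg).
Proof. intros; apply (is_derive_plus f g); auto. Qed.
Lemma der_const (a t : R) : is_derive (fun _ => a) t 0.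
Proof. apply (is_derive_const a). Qed.
Lemma der_scal (a : R) (f : R -> R) t df : is_derive f t df -> is_derive (fun s => a * f s) t (a * df).
Proof. intros; apply (is_derive_scal f); auto. Qed.
Lemma der_divc (f : R -> R) (a t df : R) : a <> 0 -> is_derive f t df -> is_derive (fun s => f s / a) t (df / a).
Proof. intros Ha H. eapply der_eq. exact (is_derive_div f (fun _ => a) t df 0 H (der_const a t) Ha).
  simpl. field. exact Ha. Qed.
Lemma ee0 mu : ee mu 0 = 1.
Proof. unfold ee. replace (-mu*0) with 0 by ring. apply exp_0. Qed.

Ltac cont leaf := repeat first [leaf | apply cont_const | apply cont_minus | apply cont_plus | apply cont_div | apply cont_mult ].

Lemma pos_case
  (mu ua am ap um up sigma0 omega0 : R)
  (Hmu : 0 < mu) (Ham : 0 < am) (Hap : 0 < ap) (Hu : up < um)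
  (Hs0 : up < sigma0 < um) (Ho0 : 0 < omega0) :
  let al := am in
  let ar := ap in
  let ul := fun t => ua + (um - ua) * exp (- mu * t) in
  let ur := fun t => ua + (up - ua) * exp (- mu * t) in
  exists (omega omega' sigma sigma' : R -> R),
    C1_nonneg_with omega omega' /\
    C1_nonneg_with sigma sigma' /\
    (forall t, 0 <= t ->
       omega' t = (ar - al) * sigma t - (ar * ur t - al * ul t)) /\
    has_deriv_nonneg (fun t => omega t * sigma t)
      (fun t => (ar * ur t - al * ul t) * sigma t
                - (ar * (ur t)^2 - al * (ul t)^2)
                + mu * (ua - sigma t) * omega t) /\
    omega 0 = omega0 /\
    sigma 0 * omega 0 = sigma0 * omega0 /\
    (forall t, 0 <= t -> ur t < sigma t < ul t).
Proof.
  cbv zeta.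
  set (A := ap). set (B := am). set (c := sigma0 - up). set (d := um - up). set (o := omega0).
  assert (Hc : 0 < c) by (unfold c; lra). assert (Hcd : c < d) by (unfold c, d; lra).
  set (U := UU A B mu o c d). set (Z := ZZ A B mu o c d).
  set (S := fun t => ua + (up - ua) * ee mu t + ee mu t * Z t).
  set (Z' := fun t => mu*ee mu t*(B*(d-Z t)^2 - A*(Z t)^2)/U t).
  set (S' := fun t => (up - ua) * (- mu * ee mu t) + ((- mu * ee mu t) * Z t + ee mu t * Z' t)).
  assert (HSd : forall t, 0 <= t -> is_derive S t (S' t)).
  { intros t Ht. unfold S. eapply der_eq. apply der_plus. apply der_plus.
    apply der_const. apply der_scal. apply ee_der.
    apply der_mult. apply ee_der. apply ZZ_der; auto.
    unfold S', Z', Z, U. ring. }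
  assert (HUd : forall t, 0 <= t -> is_derive (fun s => U s / mu) t
     (mu*ee mu t*((A-B)*Z t + B*d) / mu)).
  { intros t Ht. apply der_divc. lra. apply UU_der; auto. }
  assert (HUp : forall t, 0 <= t -> 0 < U t) by (intros; apply UU_pos; auto).
  assert (HZc : forall t, 0 <= t -> continuity_pt Z t)
    by (intros t Ht; exact (der_cont _ _ _ (ZZ_der A B mu o c d Hap Ham Hmu Ho0 Hc Hcd t Ht))).
  assert (HUc : forall t, 0 <= t -> continuity_pt U t)
    by (intros t Ht; exact (der_cont _ _ _ (UU_der A B mu o c d Hap Ham Hmu Ho0 Hc Hcd t Ht))).
  assert (Hec : forall t, continuity_pt (ee mu) t)
    by (intros t; exact (der_cont _ _ _ (ee_der mu t))).
  assert (HSc : forall t, 0 <= t -> continuity_pt S t)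
    by (intros t Ht; exact (der_cont _ _ _ (HSd t Ht))).
  exists (fun t => U t / mu),
    (fun t => (ap - am) * S t - (ap * (ua + (up - ua) * ee mu t) - am * (ua + (um - ua) * ee mu t))),
    S, S'.
  split; [split|split; [split|split; [|split; [|split; [|split]]]]].
  - apply deriv_bridge. intros t Ht. eapply der_eq. apply HUd; auto.
    unfold S, ee. fold (ee mu t). unfold A, B, d. field. lra.
  - apply cont_bridge. intros t Ht. cont ltac:(first [apply (HSc t Ht) | apply (Hec t)]).
  - apply deriv_bridge. exact HSd.
  - apply cont_bridge. intros t Ht. unfold S', Z'.
    cont ltac:(first [apply (HZc t Ht) | apply (Hec t) | apply (HUc t Ht) | apply cont_pow2]).
    generalize (HUp t Ht); lra.
  - intros; reflexivity.
  - apply deriv_bridge. intros t Ht. eapply der_eq. apply der_mult. apply HUd; auto. apply HSd; auto.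
    generalize (HUp t Ht). unfold S, S', Z'. unfold ee. set (E := exp (-mu*t)). set (Zt := Z t).
    set (Ut := U t). clearbody E Zt Ut. intros HU. unfold A, B, d. field. lra.
  - destruct (init_vals A B mu o c d Hmu Ho0) as [_ [H1 _]].
    unfold U. rewrite H1. unfold o. field. lra.
  - destruct (init_vals A B mu o c d Hmu Ho0) as [_ [H1 H2]].
    unfold S, U, Z. rewrite H1, H2, ee0. unfold o, c. field. lra.
  - intros t Ht. destruct (ZZ_bounds A B mu o c d Hap Ham Hmu Ho0 Hc Hcd t Ht) as [H1 H2].
    fold Z in H1, H2. generalize (ee_pos mu t). unfold S. unfold ee. intro He.
    unfold d in H2. split; nra.
Qed.


Lemma zero_case
  (mu ua am ap um up sigma0 omega0 : R)
  (Hmu : 0 < mu) (Ham : 0 < am) (Hap : 0 < ap) (Hu : up < um)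
  (Hs0 : up < sigma0 < um) (Ho0 : omega0 = 0) :
  let al := am in
  let ar := ap in
  let ul := fun t => ua + (um - ua) * exp (- mu * t) in
  let ur := fun t => ua + (up - ua) * exp (- mu * t) in
  exists (omega omega' sigma sigma' : R -> R),
    C1_nonneg_with omega omega' /\
    C1_nonneg_with sigma sigma' /\
    (forall t, 0 <= t ->
       omega' t = (ar - al) * sigma t - (ar * ur t - al * ul t)) /\
    has_deriv_nonneg (fun t => omega t * sigma t)
      (fun t => (ar * ur t - al * ul t) * sigma t
                - (ar * (ur t)^2 - al * (ul t)^2)
                + mu * (ua - sigma t) * omega t) /\
    omega 0 = omega0 /\
    sigma 0 * omega 0 = sigma0 * omega0 /\
    (forall t, 0 <= t -> ur t < sigma t < ul t).
Proof.
  cbv zeta.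
  set (a := sqrt ap). set (b := sqrt am). set (d := um - up).
  assert (Ha : 0 < a) by (apply sqrt_lt_R0; auto).
  assert (Hb : 0 < b) by (apply sqrt_lt_R0; auto).
  assert (Ha2 : ap = a*a) by (symmetry; apply sqrt_sqrt; lra).
  assert (Hb2 : am = b*b) by (symmetry; apply sqrt_sqrt; lra).
  set (k := a*b*d). set (zs := b*d/(a+b)).
  set (S := fun t => ua + (up - ua) * ee mu t + ee mu t * zs).
  set (S' := fun t => (up - ua) * (- mu * ee mu t) + (- mu * ee mu t) * zs).
  assert (HSd : forall t, is_derive S t (S' t)).
  { intros t. unfold S. eapply der_eq. apply der_plus. apply der_plus.
    apply der_const. apply der_scal. apply ee_der.
    apply der_mult. apply ee_der. apply der_const.
    unfold S'. ring. }
  assert (HOd : forall t, is_derive (fun s => k * (1 - ee mu s) / mu) t (k * ee mu t)).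
  { intros t. eapply der_eq. apply der_divc. lra. apply der_scal.
    apply (is_derive_minus (fun _ => 1) (ee mu)). apply der_const. apply ee_der.
    unfold minus, plus, opp; simpl. field. lra. }
  assert (Hec : forall t, continuity_pt (ee mu) t)
    by (intros t; exact (der_cont _ _ _ (ee_der mu t))).
  assert (HSc : forall t, continuity_pt S t)
    by (intros t; exact (der_cont _ _ _ (HSd t))).
  exists (fun s => k * (1 - ee mu s) / mu),
    (fun t => (ap - am) * S t - (ap * (ua + (up - ua) * ee mu t) - am * (ua + (um - ua) * ee mu t))),
    S, S'.
  split; [split|split; [split|split; [|split; [|split; [|split]]]]].
  - apply deriv_bridge. intros t Ht. eapply der_eq. apply HOd.
    unfold S, zs, k, d. rewrite Ha2, Hb2. field. lra.
  - apply cont_bridge. intros t Ht. cont ltac:(first [apply (HSc t) | apply (Hec t)]).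
  - apply deriv_bridge. intros t _. exact (HSd t).
  - apply cont_bridge. intros t Ht. unfold S'. cont ltac:(apply (Hec t)).
  - intros; reflexivity.
  - apply deriv_bridge. intros t Ht. eapply der_eq. apply der_mult. apply HOd. apply HSd.
    unfold S, S', zs, k, d. unfold ee. rewrite Ha2, Hb2. field. lra.
  - rewrite ee0, Ho0. field. lra.
  - rewrite ee0, Ho0. field. lra.
  - intros t Ht. generalize (ee_pos mu t). unfold S. unfold ee. intro He.
    assert (0 < zs) by (unfold zs, d; apply Rdiv_lt_0_compat; [apply Rmult_lt_0_compat|]; lra).
    assert (zs < d).
    { unfold zs. apply Rmult_lt_reg_r with (a+b). lra. unfold Rdiv.
      rewrite Rmult_assoc, Rinv_l, Rmult_1_r by lra. unfold d. nra. }
    unfold d in *. split; nra.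
Qed.


Theorem mainTheorem14
  (mu ua am ap um up sigma0 omega0 : R)
  (Hmu : 0 < mu) (Ham : 0 < am) (Hap : 0 < ap) (Hu : up < um)
  (Hs0 : up < sigma0 < um) (Ho0 : 0 <= omega0) :
  let al := am in
  let ar := ap in
  let ul := fun t => ua + (um - ua) * exp (- mu * t) in
  let ur := fun t => ua + (up - ua) * exp (- mu * t) in
  exists (omega omega' sigma sigma' : R -> R),
    C1_nonneg_with omega omega' /\
    C1_nonneg_with sigma sigma' /\
    (forall t, 0 <= t ->
       omega' t = (ar - al) * sigma t - (ar * ur t - al * ul t)) /\
    has_deriv_nonneg (fun t => omega t * sigma t)
      (fun t => (ar * ur t - al * ul t) * sigma t
                - (ar * (ur t)^2 - al * (ul t)^2)
                + mu * (ua - sigma t) * omega t) /\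
    omega 0 = omega0 /\
    sigma 0 * omega 0 = sigma0 * omega0 /\
    (forall t, 0 <= t -> ur t < sigma t < ul t).

Proof.
  destruct Ho0 as [Hp|Hz].
  - apply pos_case; auto.
  - apply zero_case; auto.
Qed.
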